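(* In a commutative A-loop $Q$, the set $K_1(Q)=\{x^2 : x\in Q\}$ is a normal subloop of $Q$.
   Context: A loop is a set with a binary operation and neutral element $1$ in which all left and right translations are bijections; $\mathrm{Inn}(Q)$ is the stabilizer of $1$ in the group generated by all translations. A commutative A-loop is a commutative loop all of whose inner mappings are automorphisms. A normal subloop is a subloop invariant under all inner mappings (equivalently, the kernel of a homomorphism). *)

(* Defs.v *)
From mathcomp Require Import ssreflect ssrfun ssrbool.
Set Implicit Arguments. Unset Strict Implicit.

Section Loops.
Variables (T : Type) (mul : T -> T -> T) (one : T).

Definition is_loop : Prop :=
  (forall x, mul one x = x) /\ (forall x, mul x one = x) /\
  (forall x, bijective (mul x)) /\ (forall x, bijective (fun y => mul y x)).

Definition commutative_loop : Prop :=
  is_loop /\ (forall x y, mul x y = mul y x).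

Inductive mlt : (T -> T) -> Prop :=
| mlt_L x : mlt (mul x)
| mlt_R x : mlt (fun y => mul y x)
| mlt_id : mlt id
| mlt_comp f g : mlt f -> mlt g -> mlt (f \o g)
| mlt_inv f g : mlt f -> cancel f g -> cancel g f -> mlt g.

Definition inner_mapping (f : T -> T) : Prop := mlt f /\ f one = one.

Definition loop_automorphism (f : T -> T) : Prop :=
  bijective f /\ (forall x y, f (mul x y) = mul (f x) (f y)).

Definition commutative_A_loop : Prop :=
  commutative_loop /\ (forall f, inner_mapping f -> loop_automorphism f).

(* Subloop: contains 1, closed under multiplication and under both divisions. *)
Definition subloop (S : T -> Prop) : Prop :=
  S one /\ (forall a b, S a -> S b -> S (mul a b)) /\
  (forall a b x, S a -> S b -> mul a x = b -> S x) /\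
  (forall a b x, S a -> S b -> mul x a = b -> S x).

Definition normal_subloop (S : T -> Prop) : Prop :=
  subloop S /\ (forall f x, inner_mapping f -> S x -> S (f x)).

Definition K1 : T -> Prop := fun z => exists x, z = mul x x.

End Loops.

(* Main.v *)
Require Import Defs.
From mathcomp Require Import ssreflect ssrfun ssrbool.

Lemma cA_mul1l {T} {mul : T -> T -> T} {one} : commutative_A_loop mul one -> forall x, mul one x = x.
Proof. by move=> [[[H1 _] _] _]. Qed.

Lemma cA_mul1r {T} {mul : T -> T -> T} {one} : commutative_A_loop mul one -> forall x, mul x one = x.
Proof. by move=> [[[_ [H1 _]] _] _]. Qed.

Lemma cA_comm {T} {mul : T -> T -> T} {one} : commutative_A_loop mul one -> forall x y, mul x y = mul y x.
Proof. by move=> [[_ H] _]. Qed.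

Lemma cA_hom {T} {mul : T -> T -> T} {one} : commutative_A_loop mul one ->
  forall f, mlt mul f -> f one = one -> forall a b, f (mul a b) = mul (f a) (f b).
Proof. move=> [_ HA] f Hf H1. by case: (HA f (conj Hf H1)). Qed.

Lemma cA_Linv {T} {mul : T -> T -> T} {one} : commutative_A_loop mul one ->
  forall x, exists g, [/\ mlt mul g, cancel (mul x) g & cancel g (mul x)].
Proof.
move=> [[[_ [_ [HL _]]] _] _] x. case: (HL x) => g c1 c2.
exists g; split => //. exact: (mlt_inv (mlt_L mul x) c1 c2).
Qed.

Lemma cA_lcan {T} {mul : T -> T -> T} {one} : commutative_A_loop mul one ->
  forall x a b, mul x a = mul x b -> a = b.
Proof.
move=> H x a b E. case: (cA_Linv H x) => g [_ c1 _].
by rewrite -(c1 a) E c1.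
Qed.

Lemma cA_inv {T} {mul : T -> T -> T} {one} : commutative_A_loop mul one ->
  forall x, exists x', mul x x' = one.
Proof.
move=> H x. case: (cA_Linv H x) => g [_ _ c2]. by exists (g one).
Qed.

Lemma cA_K1_inner {T} {mul : T -> T -> T} {one} : commutative_A_loop mul one ->
  forall f, mlt mul f -> f one = one -> forall x, K1 mul x -> K1 mul (f x).
Proof.
move=> H f Hf H1 x [t ->]. exists (f t). exact: (cA_hom H _ Hf H1).
Qed.

Lemma cA_sqL2 {T} {mul : T -> T -> T} {one} : commutative_A_loop mul one ->
  forall x y, K1 mul (mul x (mul x (mul y y))).
Proof.
move=> H x y.
have m1r := cA_mul1r H. have cm := cA_comm H. have lc := cA_lcan H.
set w := mul x y.
case: (cA_Linv H w) => gw [mgw cw1 cw2].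
set b := gw x.
have wb : mul w b = x by rewrite /b cw2.
case: (cA_inv H y) => y' yy'.
case: (cA_inv H b) => b' bb'.
pose phi := gw \o (mul x \o mul y).
have mphi : mlt mul phi by apply: mlt_comp => //; apply: mlt_comp; apply: mlt_L.
have phi1 : phi one = one by rewrite /phi /= m1r -/w -{1}(m1r w) cw1.
have phiy' : phi y' = b by rewrite /phi /= yy' m1r.
have phiy : phi y = b'.
  apply: (lc b). rewrite bb' -phiy' cm -(cA_hom H _ mphi phi1) yy'. exact: phi1.
have E1 : mul x (mul y y) = mul w b'.
  by rewrite -phiy /phi /= cw2.
set v := mul x b'.
case: (cA_Linv H v) => gv [mgv cv1 cv2].
pose psi := gv \o (mul x \o mul b').
have mpsi : mlt mul psi by apply: mlt_comp => //; apply: mlt_comp; apply: mlt_L.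
have psi1 : psi one = one by rewrite /psi /= m1r -/v -{1}(m1r v) cv1.
set e := psi b.
have ve : mul v e = x by rewrite /e /psi /= (cm b' b) bb' m1r cv2.
have psix : psi x = mul e (psi w).
  by rewrite -(cA_hom H _ mpsi psi1) cm wb.
have psix2 : psi x = mul e v.
  rewrite /psi /= (cm b' x) -/v.
  have -> : mul x v = mul v (mul e v) by rewrite (cm e v) ve cm.
  by rewrite cv1.
have psiw : psi w = v.
  apply: (lc e). rewrite -psix psix2. reflexivity.
exists v. rewrite E1 -{2}psiw /psi /= cv2. by rewrite (cm b' w).
Qed.

Lemma cA_fix_inv {T} {mul : T -> T -> T} {one} : commutative_A_loop mul one ->
  forall x x', mul x x' = one -> mul x (mul x' x') = x'.
Proof.
move=> H x x' xx'.
have m1r := cA_mul1r H. have cm := cA_comm H. have lc := cA_lcan H.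
pose A := mul x \o mul x'.
have mA : mlt mul A by apply: mlt_comp; apply: mlt_L.
have A1 : A one = one by rewrite /A /= m1r xx'.
have Ax : A x = x by rewrite /A /= (cm x' x) xx' m1r.
have : A x' = x'.
  apply: (lc x). rewrite xx' (cm x (A x')).
  have -> : mul (A x') x = mul (A x') (A x) by rewrite Ax.
  by rewrite -(cA_hom H _ mA A1) (cm x' x) xx' A1.
by rewrite /A.
Qed.

Lemma cA_K1_mul {T} {mul : T -> T -> T} {one} : commutative_A_loop mul one ->
  forall a b, K1 mul a -> K1 mul b -> K1 mul (mul a b).
Proof.
move=> H a b [x ->] [y ->].
have m1r := cA_mul1r H.
case: (cA_Linv H (mul x x)) => g [mg c1 c2].
case: (cA_Linv H x) => h [mh d1 d2].
pose C := g \o (mul x \o mul x).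
have mC : mlt mul C by apply: mlt_comp => //; apply: mlt_comp; apply: mlt_L.
have C1 : C one = one by rewrite /C /= m1r -{1}(m1r (mul x x)) c1.
set z := h (h (mul (mul x x) y)).
have Cz : C z = y by rewrite /C /z /= !d2 c1.
have : mul (mul x x) (mul y y) = mul x (mul x (mul z z)).
  by rewrite -Cz -(cA_hom H _ mC C1) /C /= c2.
move=> ->. exact: (cA_sqL2 H).
Qed.

Lemma cA_K1_ldiv {T} {mul : T -> T -> T} {one} : commutative_A_loop mul one ->
  forall a b z, K1 mul a -> K1 mul b -> mul a z = b -> K1 mul z.
Proof.
move=> H a b z [x ->] [y ->] E.
have m1r := cA_mul1r H.
case: (cA_Linv H (mul x x)) => g [mg c1 c2].
case: (cA_Linv H x) => h [mh d1 d2].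
pose C := g \o (mul x \o mul x).
have mC : mlt mul C by apply: mlt_comp => //; apply: mlt_comp; apply: mlt_L.
have C1 : C one = one by rewrite /C /= m1r -{1}(m1r (mul x x)) c1.
set u := h (h (mul y y)).
have Cu : C u = z by rewrite /C /u /= !d2 -E c1.
rewrite -Cu. apply: (cA_K1_inner H _ mC C1).
case: (cA_inv H x) => x' xx'.
case: (cA_Linv H x') => h' [mh' e1 e2].
pose F := h' \o (h' \o (h \o h)).
have mF : mlt mul F.
  apply: mlt_comp => //; apply: mlt_comp => //; exact: mlt_comp.
have h1 : h one = x' by rewrite -xx' d1.
have hx' : h x' = mul x' x' by rewrite -{1}(cA_fix_inv H _ _ xx') d1.
have F1 : F one = one by rewrite /F /= h1 hx' e1 -{1}(m1r x') e1.
have : u = mul x' (mul x' (mul (F y) (F y))).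
  by rewrite -(cA_hom H _ mF F1) /F /= !e2.
move=> ->. exact: (cA_sqL2 H).
Qed.

Theorem proposition5p2 (T : Type) (mul : T -> T -> T) (one : T) :
  commutative_A_loop mul one -> normal_subloop mul one (K1 mul).
Proof.
move=> H.
have cm := cA_comm H.
split; last first.
  move=> f x [Hf H1] Hx. exact: (cA_K1_inner H _ Hf H1).
split; first by exists one; rewrite (cA_mul1r H).
split; first exact: (cA_K1_mul H).
split; first exact: (cA_K1_ldiv H).
move=> a b x Ha Hb E. apply: (cA_K1_ldiv H _ _ _ Ha Hb). by rewrite cm.
Qed.
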